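(* Let $S,T$ be left inverse semi-braces, $\sigma,\delta,\mathfrak b$ as follows: $\sigma:T\to\mathrm{Aut}(S)$ a homomorphism from $(T,\cdot)$ into the automorphism group of the left inverse semi-brace $S$ (${}^ua=\sigma(u)(a)$), $\delta:S\to\mathrm{End}(T,+)$ a map ($u^a=\delta(a)(u)$), and $\mathfrak b$ a $\delta$-cocycle satisfying $\mathfrak b(a\,{}^ub,\lambda_a({}^uc))+(uv)^{\lambda_a({}^uc)}+u(\mathfrak b({}^{u^{-1}}(a^{-1}),c)+(u^{-1})^c)=u(\mathfrak b(b,c)+v^c)$ for all $a,b,c\in S$, $u,v\in T$. Let $B$ be the asymmetric product, i.e. $S\times T$ with $(a,u)+(b,v)=(a+b,\mathfrak b(a,b)+u^b+v)$, $(a,u)(b,v)=(a\,{}^ub,uv)$. Then, writing $\Omega^b_{u,v}=(u^{-1})^b+v$ and $Y=\mathfrak b({}^{u^{-1}}a^{-1},b)+\Omega^b_{u,v}$, the map $r_B$ associated to $B$ is given by $$r_B((a,u),(b,v))=\left(\left(\lambda_a({}^ub),\,u\,Y\right),\ \left({}^{Y^{-1}u^{-1}}\rho_{{}^ub}(a),\ Y^{-1}v\right)\right)$$ for all $(a,u),(b,v)\in S\times T$.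
   Context: An inverse semigroup is a semigroup $(S,\cdot)$ in which for each $a$ there is a unique $a^{-1}$ with $aa^{-1}a=a$, $a^{-1}aa^{-1}=a^{-1}$. A left inverse semi-brace is a triple $(S,+,\cdot)$ with $(S,+)$ a semigroup, $(S,\cdot)$ an inverse semigroup and $a(b+c)=ab+a(a^{-1}+c)$ for all $a,b,c$. Set $\lambda_a(b)=a(a^{-1}+b)$, $\rho_b(a)=(a^{-1}+b)^{-1}b$; the map associated to $X$ is $r_X(x,y)=(\lambda_x(y),\rho_y(x))$. An automorphism of the left inverse semi-brace $S$ is a bijection preserving both operations. A $\delta$-cocycle is a map $\mathfrak b:S\times S\to T$ with $\mathfrak b(a+b,c)+\mathfrak b(a,b)^c+(u^b)^c+v^c=\mathfrak b(a,b+c)+u^{b+c}+\mathfrak b(b,c)+v^c$ for all $a,b,c\in S$, $u,v\in T$. Under these hypotheses $B$ is a left inverse semi-brace. *)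

(* Defs.v *)
Set Implicit Arguments.

Section Defs.
Variable X : Type.
Variables (add mul : X -> X -> X) (inv : X -> X).

Definition is_inverse_semigroup : Prop :=
  (forall a b c, mul a (mul b c) = mul (mul a b) c) /\
  (forall a, mul (mul a (inv a)) a = a) /\
  (forall a, mul (mul (inv a) a) (inv a) = inv a) /\
  (forall a x, mul (mul a x) a = a -> mul (mul x a) x = x -> x = inv a).

Definition is_left_inverse_semibrace : Prop :=
  (forall a b c, add a (add b c) = add (add a b) c) /\
  is_inverse_semigroup /\
  (forall a b c, mul a (add b c) = add (mul a b) (mul a (add (inv a) c))).

Definition lam (a b : X) : X := mul a (add (inv a) b).
Definition rho (b a : X) : X := mul (inv (add (inv a) b)) b.

Definition rmap (x y : X) : X * X := (lam x y, rho y x).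
End Defs.

Definition is_semibrace_aut (S : Type) (add mul : S -> S -> S) (f : S -> S) : Prop :=
  (exists g : S -> S, (forall x, g (f x) = x) /\ (forall y, f (g y) = y)) /\
  (forall a b, f (add a b) = add (f a) (f b)) /\
  (forall a b, f (mul a b) = mul (f a) (f b)).

Definition is_delta_cocycle (S T : Type) (addS : S -> S -> S) (addT : T -> T -> T)
  (delta : S -> T -> T) (bc : S -> S -> T) : Prop :=
  forall (a b c : S) (u v : T),
    addT (addT (addT (bc (addS a b) c) (delta c (bc a b))) (delta c (delta b u))) (delta c v)
    = addT (addT (addT (bc a (addS b c)) (delta (addS b c) u)) (bc b c)) (delta c v).

Definition asym_add (S T : Type) (addS : S -> S -> S) (addT : T -> T -> T)
  (delta : S -> T -> T) (bc : S -> S -> T) (x y : S * T) : S * T :=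
  (addS (fst x) (fst y), addT (addT (bc (fst x) (fst y)) (delta (fst y) (snd x))) (snd y)).

Definition asym_mul (S T : Type) (mulS : S -> S -> S) (mulT : T -> T -> T)
  (sigma : T -> S -> S) (x y : S * T) : S * T :=
  (mulS (fst x) (sigma (snd x) (fst y)), mulT (snd x) (snd y)).

(* Main.v *)
Require Import Defs.
From Stdlib Require Import Setoid.

Theorem proposition54
  (S T : Type)
  (addS mulS : S -> S -> S) (invS : S -> S)
  (addT mulT : T -> T -> T) (invT : T -> T)
  (hS : is_left_inverse_semibrace addS mulS invS)
  (hT : is_left_inverse_semibrace addT mulT invT)
  (sigma : T -> S -> S)
  (sigma_aut : forall u, is_semibrace_aut addS mulS (sigma u))
  (sigma_hom : forall u v a, sigma (mulT u v) a = sigma u (sigma v a))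
  (delta : S -> T -> T)
  (delta_end : forall a u v, delta a (addT u v) = addT (delta a u) (delta a v))
  (bc : S -> S -> T)
  (bc_cocycle : is_delta_cocycle addS addT delta bc)
  (bc_cond : forall (a b c : S) (u v : T),
     addT (addT (bc (mulS a (sigma u b)) (lam addS mulS invS a (sigma u c)))
                (delta (lam addS mulS invS a (sigma u c)) (mulT u v)))
          (mulT u (addT (bc (sigma (invT u) (invS a)) c) (delta c (invT u))))
     = mulT u (addT (bc b c) (delta c v)))
  (invB : S * T -> S * T)
  (hB : is_inverse_semigroup (asym_mul mulS mulT sigma) invB) :
  forall (a b : S) (u v : T),
    let Y := addT (bc (sigma (invT u) (invS a)) b) (addT (delta b (invT u)) v) in
    rmap (asym_add addS addT delta bc) (asym_mul mulS mulT sigma) invB (a, u) (b, v)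
    = ((lam addS mulS invS a (sigma u b), mulT u Y),
       (sigma (mulT (invT Y) (invT u)) (rho addS mulS invS (sigma u b) a),
        mulT (invT Y) v)).
Proof.
  destruct hS as [addSA [[mSA [mS1 [mS2 mSU]]] _]].
  destruct hT as [addTA [[mTA [mT1 [mT2 mTU]]] _]].
  assert (sid : forall e a, mulT e e = e -> sigma e a = a).
  { intros e a He. destruct (sigma_aut e) as [[g [Hg1 _]] _].
    rewrite <- (Hg1 a) at 2. rewrite <- He at 2. rewrite sigma_hom, Hg1. reflexivity. }
  assert (idem1 : forall u, mulT (mulT u (invT u)) (mulT u (invT u)) = mulT u (invT u)).
  { intro u. rewrite mTA, mT1. reflexivity. }
  assert (idem2 : forall u, mulT (mulT (invT u) u) (mulT (invT u) u) = mulT (invT u) u).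
  { intro u. rewrite mTA, mT2. reflexivity. }
  assert (sinv : forall w x, sigma w (invS x) = invS (sigma w x)).
  { intros w x. destruct (sigma_aut w) as [_ [_ Hm]]. apply mSU.
    - rewrite <- !Hm. rewrite mS1. reflexivity.
    - rewrite <- !Hm. rewrite mS2. reflexivity. }
  assert (hinv : forall a u, invB (a, u) = (sigma (invT u) (invS a), invT u)).
  { intros a u. destruct hB as [_ [_ [_ HU]]]. symmetry. apply HU;
    unfold asym_mul; simpl.
    - rewrite <- (sigma_hom u (invT u)), !(sid (mulT u (invT u))) by apply idem1.
      rewrite mS1, mT1. reflexivity.
    - destruct (sigma_aut (invT u)) as [_ [_ Hm]].
      rewrite (sid (mulT (invT u) u)) by apply idem2.
      rewrite <- Hm, <- Hm, mS2, mT2. reflexivity.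
  }
  intros a b u v Y. unfold rmap, lam, rho, asym_add, asym_mul. rewrite hinv. simpl.
  rewrite hinv. simpl.
  destruct (sigma_aut u) as [_ [Hau _]].
  destruct (sigma_aut (invT u)) as [_ [Hai Hmi]].
  destruct (sigma_aut (invT Y)) as [_ [_ HmY]].
  assert (EY : addT (addT (bc (sigma (invT u) (invS a)) b) (delta b (invT u))) v = Y).
  { unfold Y. rewrite addTA. reflexivity. }
  rewrite EY, Hau, <- sigma_hom, sid by apply idem1.
  rewrite sigma_hom, Hmi, (sinv (invT u) (addS _ _)), Hai, (sinv (invT u) a).
  rewrite <- (sigma_hom (invT u) u), (sid (mulT (invT u) u)) by apply idem2.
  rewrite HmY, <- sinv. reflexivity.
Qed.
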